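(* Let $T>0$, $0<\eta<T$ and $0<\alpha<\frac{1}{\eta}$. If $y\in C([0,T],[0,\infty))$, then the unique solution $u$ of the problem \[ u''(t)+y(t)=0,\quad t\in(0,T),\qquad u'(0)=0,\quad u(T)=\alpha\int_0^{\eta}u(s)\,ds \] satisfies \[ \min_{t\in[0,T]}u(t)\ge \gamma\|u\|,\qquad\text{where } \gamma=\frac{\alpha\eta(T-\eta)}{T-\alpha\eta^2},\quad \|u\|=\max_{t\in[0,T]}|u(t)|. \] *)

(* Defs.v *)
From Stdlib Require Import Reals.
From Coquelicot Require Import Coquelicot.
Open Scope R_scope.

Definition cont_on_interval (f : R -> R) (a b : R) : Prop :=
  forall t, a <= t <= b ->
    filterlim f (within (fun x => a <= x <= b) (locally t)) (locally (f t)).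

Definition right_deriv (f : R -> R) (x l : R) : Prop :=
  filterlim (fun h => (f (x + h) - f x) / h) (at_right 0) (locally l).

(* Main.v *)
Require Import Defs.
From Stdlib Require Import Reals Lra.
From Coquelicot Require Import Coquelicot.
Open Scope R_scope.

Definition clamp (T x : R) := Rmax 0 (Rmin T x).

Lemma clamp_id T x : 0 <= x <= T -> clamp T x = x.
Proof. intros. unfold clamp, Rmax, Rmin. repeat destruct Rle_dec; lra. Qed.

Lemma clamp_in T x : 0 <= T -> 0 <= clamp T x <= T.
Proof. intros. unfold clamp, Rmax, Rmin. repeat destruct Rle_dec; lra. Qed.

Lemma clamp_lip T x y : 0 <= T -> Rabs (clamp T x - clamp T y) <= Rabs (x - y).
Proof.
  intros. unfold clamp, Rmax, Rmin.
  repeat destruct Rle_dec; unfold Rabs; repeat destruct Rcase_abs; lra.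
Qed.

Lemma clamp_cont (u : R -> R) T t : 0 < T -> cont_on_interval u 0 T -> 0 <= t <= T ->
  continuity_pt (fun x => u (clamp T x)) t.
Proof.
  intros hT hc ht. apply continuity_pt_filterlim.
  rewrite (clamp_id T t ht).
  apply filterlim_comp with (G := within (fun x => 0 <= x <= T) (locally t)).
  2: apply hc; exact ht.
  intros P [eps HP]. exists eps. intros x Hx. simpl.
  apply HP. 2: apply clamp_in; lra.
  change (Rabs (clamp T x - t) < eps).
  rewrite <- (clamp_id T t ht) at 1.
  eapply Rle_lt_trans. apply clamp_lip; lra. exact Hx.
Qed.

Lemma mvt_open f df a b : a < b ->
  (forall x, a < x < b -> is_derive f x (df x)) ->
  (forall x, a <= x <= b -> continuity_pt f x) ->
  exists c, a < c < b /\ f b - f a = df c * (b - a).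
Proof.
  intros hab hd hc.
  assert (pr1 : forall c, a < c < b -> derivable_pt f c).
  { intros c Hc. exists (df c). apply is_derive_Reals. apply hd. exact Hc. }
  assert (pr2 : forall c, a < c < b -> derivable_pt id c).
  { intros c _. apply derivable_pt_id. }
  destruct (MVT f id a b pr1 pr2 hab hc) as [c [P H]].
  { intros c _. apply derivable_continuous_pt. apply derivable_pt_id. }
  exists c. split; [exact P|].
  assert (E1 : derive_pt f c (pr1 c P) = df c).
  { apply derive_pt_eq_0. apply is_derive_Reals. apply hd. exact P. }
  assert (E2 : derive_pt id c (pr2 c P) = 1).
  { apply derive_pt_eq_0. apply derivable_pt_lim_id. }
  rewrite E1, E2 in H. unfold id in H. lra.
Qed.

Theorem lemma2p4 (T eta alpha : R) (y u du : R -> R)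
  (hT : 0 < T) (heta : 0 < eta < T) (halpha : 0 < alpha < 1 / eta)
  (hy_cont : cont_on_interval y 0 T)
  (hy_nonneg : forall t, 0 <= t <= T -> 0 <= y t)
  (* u is a solution of the boundary value problem *)
  (hu_cont : cont_on_interval u 0 T)
  (hu_d1 : forall t, 0 < t < T -> is_derive u t (du t))
  (hu_d2 : forall t, 0 < t < T -> is_derive du t (- y t))
  (hu_left : right_deriv u 0 0)
  (hu_right : u T = alpha * RInt u 0 eta) :
  let gamma := alpha * eta * (T - eta) / (T - alpha * eta ^ 2) in
  forall t s, 0 <= t <= T -> 0 <= s <= T -> u t >= gamma * Rabs (u s).
Proof.
  intros gamma t s ht hs.
  set (v := fun x => u (clamp T x)).
  assert (hvu : forall x, 0 <= x <= T -> v x = u x).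
  { intros x Hx. unfold v. rewrite clamp_id; auto. }
  assert (hvc : forall x, 0 <= x <= T -> continuity_pt v x).
  { intros x Hx. apply clamp_cont; auto. }
  assert (hvd : forall x, 0 < x < T -> is_derive v x (du x)).
  { intros x Hx. apply is_derive_ext_loc with u; [|apply hu_d1; auto].
    assert (He : 0 < Rmin x (T - x)) by (apply Rmin_pos; lra).
    exists (mkposreal _ He). intros z Hz.
    change (Rabs (z - x) < Rmin x (T - x)) in Hz.
    assert (Rmin x (T - x) <= x) by apply Rmin_l.
    assert (Rmin x (T - x) <= T - x) by apply Rmin_r.
    unfold Rabs in Hz; destruct Rcase_abs in Hz;
    symmetry; apply hvu; lra. }
  assert (hA : forall a b, 0 < a -> a < b -> b < T -> du b <= du a).
  { intros a b Ha Hab Hb.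
    destruct (mvt_open du (fun x => - y x) a b Hab) as [c [Hc E]].
    - intros x Hx. apply hu_d2; lra.
    - intros x Hx. apply continuity_pt_filterlim.
      assert (He : ex_derive du x) by (exists (- y x); apply hu_d2; lra).
      exact (@ex_derive_continuous R_AbsRing R_NormedModule du x He).
    - assert (0 <= y c) by (apply hy_nonneg; lra). nra. }
  assert (hB : forall x, 0 < x < T -> du x <= 0).
  { intros x Hx. destruct (Rle_or_lt (du x) 0) as [H|H]; [exact H|].
    exfalso.
    assert (hC : forall h, 0 < h < x -> v h - v 0 >= du x * h).
    { intros h Hh.
      destruct (mvt_open v du 0 h) as [c [Hc E]]; try lra.
      - intros z Hz. apply hvd; lra.
      - intros z Hz. apply hvc; lra.
      - assert (du x <= du c) by (apply hA; lra). nra. }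
    assert (Hd : 0 < du x / 2) by lra.
    destruct (hu_left (ball 0 (du x / 2))) as [eps Heps].
    { exists (mkposreal _ Hd). auto. }
    set (h := Rmin (eps / 2) (x / 2)).
    assert (Hh1 : h <= eps / 2) by apply Rmin_l.
    assert (Hh2 : h <= x / 2) by apply Rmin_r.
    assert (Hh0 : 0 < h) by (apply Rmin_pos; destruct eps; simpl; lra).
    assert (Hb : ball 0 eps h).
    { change (Rabs (h - 0) < eps). rewrite Rabs_right; destruct eps; simpl in *; lra. }
    specialize (Heps h Hb Hh0).
    change (Rabs ((u (0 + h) - u 0) / h - 0) < du x / 2) in Heps.
    rewrite Rplus_0_l in Heps.
    rewrite <- (hvu h) in Heps by lra. rewrite <- (hvu 0) in Heps by lra.
    specialize (hC h ltac:(lra)).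
    set (q := (v h - v 0) / h) in Heps.
    assert (Eq : q * h = v h - v 0) by (unfold q; field; lra).
    apply Rabs_def2 in Heps. nra. }
  assert (hM : forall a b, 0 <= a <= b -> b <= T -> v b <= v a).
  { intros a b Hab Hb. destruct (Req_dec a b) as [->|Hne]; [lra|].
    destruct (mvt_open v du a b) as [c [Hc E]]; try lra.
    - intros z Hz. apply hvd; lra.
    - intros z Hz. apply hvc; lra.
    - assert (du c <= 0) by (apply hB; lra). nra. }
  assert (hD : T * v eta >= (T - eta) * v 0 + eta * v T).
  { destruct (mvt_open v du 0 eta) as [c1 [Hc1 E1]]; try lra.
    - intros z Hz. apply hvd; lra.
    - intros z Hz. apply hvc; lra.
    - destruct (mvt_open v du eta T) as [c2 [Hc2 E2]]; try lra.
      + intros z Hz. apply hvd; lra.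
      + intros z Hz. apply hvc; lra.
      + assert (du c2 <= du c1) by (apply hA; lra).
        assert (0 <= (T - eta) * eta * (du c1 - du c2)).
        { apply Rmult_le_pos; [apply Rmult_le_pos|]; lra. }
        nra. }
  assert (hE : RInt u 0 eta >= eta * v eta).
  { rewrite (RInt_ext u v).
    2:{ intros x Hx. rewrite Rmin_left in Hx by lra. rewrite Rmax_right in Hx by lra.
        symmetry. apply hvu; lra. }
    assert (RInt (fun _ => v eta) 0 eta <= RInt v 0 eta).
    { apply RInt_le; try lra.
      - apply ex_RInt_const.
      - apply (@ex_RInt_continuous R_CompleteNormedModule). intros z Hz.
        rewrite Rmin_left in Hz by lra. rewrite Rmax_right in Hz by lra.
        apply continuity_pt_filterlim. apply hvc; lra.
      - intros x Hx. apply hM; lra. }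
    rewrite RInt_const in H. change (scal (eta - 0) (v eta)) with ((eta - 0) * v eta) in H.
    lra. }
  assert (hae : alpha * eta < 1).
  { assert (1 / eta * eta = 1) by (field; lra). nra. }
  assert (hK : 0 < T - alpha * eta ^ 2) by nra.
  assert (hvT : v T = alpha * RInt u 0 eta) by (rewrite hvu; lra).
  assert (s1 : v T >= alpha * eta * v eta).
  { rewrite hvT. replace (alpha * eta * v eta) with (alpha * (eta * v eta)) by ring.
    apply Rle_ge. apply Rmult_le_compat_l; lra. }
  assert (s2 : v T * T >= alpha * eta * (T * v eta)).
  { replace (alpha * eta * (T * v eta)) with ((alpha * eta * v eta) * T) by ring.
    apply Rle_ge. apply Rmult_le_compat_r; lra. }
  assert (s3 : alpha * eta * (T * v eta) >= alpha * eta * ((T - eta) * v 0 + eta * v T)).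
  { apply Rle_ge. apply Rmult_le_compat_l; [nra|lra]. }
  assert (hkey : v T * (T - alpha * eta ^ 2) >= alpha * eta * (T - eta) * v 0) by nra.
  assert (hgK : gamma * (T - alpha * eta ^ 2) = alpha * eta * (T - eta)) by (unfold gamma; field; lra).
  assert (hg0 : 0 <= gamma).
  { unfold gamma. apply Rmult_le_pos; [|left; apply Rinv_0_lt_compat; lra].
    apply Rmult_le_pos; nra. }
  assert (hg1 : gamma < 1) by nra.
  assert (hP : (v T - gamma * v 0) * (T - alpha * eta ^ 2) >= 0).
  { replace ((v T - gamma * v 0) * (T - alpha * eta ^ 2)) with
      (v T * (T - alpha * eta ^ 2) - (gamma * (T - alpha * eta ^ 2)) * v 0) by ring.
    rewrite hgK. lra. }
  assert (hvT' : v T >= gamma * v 0).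
  { destruct (Rle_or_lt (gamma * v 0) (v T)) as [H|H]; [lra|].
    assert ((v T - gamma * v 0) * (T - alpha * eta ^ 2) < 0).
    { apply Rmult_neg_pos; lra. } lra. }
  assert (h0T : v T <= v 0) by (apply hM; lra).
  assert (hv0 : 0 <= v 0) by nra.
  assert (hsT : v T <= v s) by (apply hM; lra).
  assert (hs0 : v s <= v 0) by (apply hM; lra).
  assert (htT : v T <= v t) by (apply hM; lra).
  rewrite <- (hvu t ht), <- (hvu s hs).
  rewrite Rabs_right by nra.
  nra.
Qed.
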